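(* Let $V$ be a Banach $\mathbb O$-bimodule, $T\in\mathscr B_{\mathcal{RO}}(V)$, $v\in\operatorname{Re}V$ and $\phi\in V^{*_{\mathbb O}}$. Set $g(s)=\phi\big((R_s-T)^{\circledcirc-}(v)\big)$ for $s\in\rho^*(T)$. Then for every $J\in\mathbb S$, $g$ is continuously differentiable on the open set $\rho_J^*(T)\subseteq\mathbb C_J$ and, writing $s=x+yJ$, satisfies $\frac{\partial g}{\partial x}(s)+\frac{\partial g}{\partial y}(s)\,J=0$ there; i.e. $g$ is right slice regular on the pull-back resolvent set.
   Context: $\mathbb O$ is the real octonion algebra with basis $e_0=1,\dots,e_7$; $\mathbb S=\{J\in\mathbb O:J^2=-1\}$, $\mathbb C_J=\mathbb R+\mathbb RJ$. An $\mathbb O$-bimodule is a real vector space $M$ with real-bilinear left and right multiplications by $\mathbb O$ (with $1x=x1=x$) whose associators $[p,q,x]=(pq)x-p(qx)$, $[p,x,q]=(px)q-p(xq)$, $[x,p,q]=(xp)q-x(pq)$ satisfy $[p,q,x]=[q,x,p]=[x,p,q]=-[q,p,x]$. Its real part is $\operatorname{Re}M=\{m: pm=mp,\ [p,q,m]=0\ \forall p,q\}$, and every $x$ decomposes uniquely as $\sum_ix_ie_i$ with $x_i\in\operatorname{Re}M$. A Banach $\mathbb O$-bimodule is one with a complete norm with $\|px\|=\|xp\|=|p|\|x\|$; $\mathbb O$ itself is one. $V^{*_{\mathbb O}}$ is the set of continuous octonionic linear functionals $\phi:V\to\mathbb O$ ($\phi(xp)=\phi(x)p$, equivalently $\phi(px)=p\phi(x)$).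 $\mathscr B_{\mathbb R}(V)$: bounded real-linear operators; invertible means invertible in $\mathscr B_{\mathbb R}(V)$; $R_sv=vs$. $\mathscr B_{\mathcal{RO}}(V)$: bounded real-linear $f$ with $\operatorname{Re}(f(x)p-f(xp))=0$ for all $p,x$, where $\operatorname{Re}x$ is the $e_0$-component above. For invertible $S$, $S^{\circledcirc-}=\operatorname{ext}(S^{-1}|_{\operatorname{Re}V})$ where $(\operatorname{ext}h)(\sum_ix_ie_i)=\sum_ih(x_i)e_i$ ($x_i\in\operatorname{Re}V$); in particular $S^{\circledcirc-}(v)=S^{-1}(v)$ for $v\in\operatorname{Re}V$. $S$ is $\mathbb C_J$-extendable power associative if $S^n(w\lambda)=S^n(w)\lambda$ for all $n\ge1$, $w\in\operatorname{Re}V$, $\lambda\in\mathbb C_J$. $\rho_J^*(T)=\{s\in\mathbb C_J: R_s-T$ invertible and $(R_s-T)^{-1}$ $\mathbb C_J$-extendable power associative$\}$ (open in $\mathbb C_J$), $\rho^*(T)=\bigcup_J\rho_J^*(T)$. *)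

(* Defs.v *)
From mathcomp Require Import all_boot all_order all_algebra.
From mathcomp Require Import all_classical all_reals all_analysis.
From Stdlib Require Import ClassicalEpsilon.
Import GRing.Theory Num.Theory.
Import numFieldNormedType.Exports.

Set Implicit Arguments.
Unset Strict Implicit.
Unset Printing Implicit Defensive.

Local Open Scope ring_scope.

(* The real octonions O = R^8 with basis e_0 = 1, e_1, ..., e_7.       *)
(* Multiplication table (Fano plane): for every cyclic triple (a,b,c)  *)
(* of the list below, e_a e_b = e_c, e_b e_c = e_a, e_c e_a = e_b and   *)
(* the reversed products carry a minus sign; e_i^2 = -1 (i >= 1).       *)
(* Triples: (i, i+1, i+3) mod 7.                                         *)

Notation oct R := 'rV[R]_8.

Definition fano_triples : seq (nat * nat * nat) :=
  [:: (1, 2, 4); (2, 3, 5); (3, 4, 6); (4, 5, 7); (5, 6, 1); (6, 7, 2); (7, 1, 3)]%N.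

Definition in_cyc (t : nat * nat * nat) (i j k : nat) : bool :=
  let: (a, b, c) := t in
  [|| (i, j, k) == (a, b, c), (i, j, k) == (b, c, a) | (i, j, k) == (c, a, b)].

Definition is_pos_triple (i j k : nat) : bool :=
  has (fun t => in_cyc t i j k) fano_triples.

(* coefficient of e_k in the product e_i e_j *)
Definition oct_coef (R : nzRingType) (i j k : 'I_8) : R :=
  if (i == 0 :> nat) then ((j == k)%:R)
  else if (j == 0 :> nat) then ((i == k)%:R)
  else if (i == j) then - ((k == 0 :> nat)%:R)
  else if is_pos_triple i j k then 1
  else if is_pos_triple j i k then -1
  else 0.

Definition oct_e (R : nzRingType) (i : 'I_8) : oct R := \row_(k < 8) ((k == i)%:R).

Definition oct1 (R : nzRingType) : oct R := oct_e R ord0.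

Definition oct_mul (R : nzRingType) (p q : oct R) : oct R :=
  \row_(k < 8) \sum_(i < 8) \sum_(j < 8) p ord0 i * q ord0 j * oct_coef R i j k.

Definition oct_norm (R : rcfType) (p : oct R) : R :=
  Num.sqrt (\sum_(i < 8) p ord0 i ^+ 2).

Definition oct_sphere (R : nzRingType) (J : oct R) : Prop :=
  oct_mul J J = - oct1 R.

Definition in_CJ (R : nzRingType) (J s : oct R) : Prop :=
  exists a b : R, s = a *: oct1 R + b *: J.

Section Bimodule.
Variables (R : realType) (V : completeNormedModType R).
Variables (lm : oct R -> V -> V) (rm : V -> oct R -> V).

Definition assoc_l (p q : oct R) (x : V) : V := lm (oct_mul p q) x - lm p (lm q x).
Definition assoc_m (p : oct R) (x : V) (q : oct R) : V := rm (lm p x) q - lm p (rm x q).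
Definition assoc_r (x : V) (p q : oct R) : V := rm (rm x p) q - rm x (oct_mul p q).

Definition is_Obimodule : Prop :=
  (forall p a x y, lm p (a *: x + y) = a *: lm p x + lm p y) /\
  (forall p q a x, lm (a *: p + q) x = a *: lm p x + lm q x) /\
  (forall p a x y, rm (a *: x + y) p = a *: rm x p + rm y p) /\
  (forall p q a x, rm x (a *: p + q) = a *: rm x p + rm x q) /\
  (forall x, lm (oct1 R) x = x) /\ (forall x, rm x (oct1 R) = x) /\
  (forall p q x,
      assoc_l p q x = assoc_m q x p /\
      assoc_m q x p = assoc_r x p q /\
      assoc_r x p q = - assoc_l q p x).

Definition is_Banach_Obimodule : Prop :=
  is_Obimodule /\
  (forall p x, `|lm p x| = oct_norm p * `|x|) /\
  (forall p x, `|rm x p| = oct_norm p * `|x|).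

Definition in_ReV (m : V) : Prop :=
  (forall p, lm p m = rm m p) /\ (forall p q, assoc_l p q m = 0).

Definition is_decomp (x : V) (xs : 'I_8 -> V) : Prop :=
  (forall i, in_ReV (xs i)) /\ x = \sum_(i < 8) rm (xs i) (oct_e R i).

Definition re_comp (x : V) : 'I_8 -> V :=
  epsilon (inhabits (fun _ : 'I_8 => (0 : V))) (is_decomp x).

Definition Re_part (x : V) : V := re_comp x ord0.

Definition ext (h : V -> V) (x : V) : V :=
  \sum_(i < 8) rm (h (re_comp x i)) (oct_e R i).

Definition is_Rlinear (f : V -> V) : Prop :=
  forall (a : R) x y, f (a *: x + y) = a *: f x + f y.

Definition is_bounded_op (f : V -> V) : Prop :=
  is_Rlinear f /\ exists C : R, forall x, `|f x| <= C * `|x|.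

Definition is_BRO (f : V -> V) : Prop :=
  is_bounded_op f /\ forall p x, Re_part (rm (f x) p - f (rm x p)) = 0.

Definition is_inverse_op (S S' : V -> V) : Prop :=
  is_bounded_op S' /\ (forall x, S' (S x) = x) /\ (forall x, S (S' x) = x).

Definition invertible_op (S : V -> V) : Prop :=
  is_bounded_op S /\ exists S', is_inverse_op S S'.

Definition inv_op (S : V -> V) : V -> V :=
  epsilon (inhabits (fun x : V => x)) (is_inverse_op S).

(* S^{circledcirc -} = ext (S^{-1} restricted to Re V) *)
Definition circ_inv (S : V -> V) : V -> V := ext (inv_op S).

Definition CJ_epa (J : oct R) (S : V -> V) : Prop :=
  forall (n : nat) (w : V) (lam : oct R), (0 < n)%N -> in_ReV w -> in_CJ J lam ->
    iter n S (rm w lam) = rm (iter n S w) lam.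

Definition Rs_minus (T : V -> V) (s : oct R) : V -> V := fun x => rm x s - T x.

Definition rhoJ (T : V -> V) (J s : oct R) : Prop :=
  in_CJ J s /\ invertible_op (Rs_minus T s) /\ CJ_epa J (inv_op (Rs_minus T s)).

Definition rho_star (T : V -> V) (s : oct R) : Prop :=
  exists J, oct_sphere J /\ rhoJ T J s.

Definition is_oct_functional (phi : V -> oct R) : Prop :=
  (forall x y, phi (x + y) = phi x + phi y) /\
  (forall x p, phi (rm x p) = oct_mul (phi x) p) /\
  continuous phi.

End Bimodule.

(* Main.v *)
From HB Require Import structures.
Require Import Defs.
From mathcomp Require Import all_boot all_order all_algebra.
From mathcomp Require Import all_classical all_reals all_analysis.
From mathcomp Require Import ring lra.
From Stdlib Require Import ClassicalEpsilon.
Import Order.TTheory GRing.Theory Num.Theory.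
Import numFieldNormedType.Exports.
Local Open Scope ring_scope.

Definition cN (i j k : nat) : int :=
  if (i == 0)%N then ((j == k)%:R)
  else if (j == 0)%N then ((i == k)%:R)
  else if (i == j) then - ((k == 0)%N%:R)
  else if is_pos_triple i j k then 1
  else if is_pos_triple j i k then -1
  else 0.

Definition s8 (f : nat -> int) : int := foldr (fun i a => f i + a) 0 (iota 0 8).
Definition all8 (P : nat -> bool) := all P (iota 0 8).

Lemma all8P P : all8 P -> forall i : 'I_8, P i.
Proof. by move=> /allP H i; apply: H; rewrite mem_iota /= ltn_ord. Qed.
Arguments all8P {P}.

Lemma s8E (f : nat -> int) : \sum_(i < 8) f i = s8 f.
Proof.
by rewrite /s8 -(big_mkord xpredT f) /index_iota /= !big_cons big_nil.
Qed.

Definition XN i j l k := s8 (fun m => cN i j m * cN m l k).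
Definition YN i j l k := s8 (fun m => cN j l m * cN i m k).

Lemma alt_check : all8 (fun i => all8 (fun j => all8 (fun l => all8 (fun k =>
   XN i j l k + XN i l j k == YN i j l k + YN i l j k)))).
Proof. vm_compute; reflexivity. Qed.

Lemma re_check : all8 (fun a => all8 (fun m =>
   6 * (a == m)%:R - s8 (fun k => s8 (fun b => cN a k b * cN k b m))
   == 12 * ((a == 0) && (m == 0))%N%:R)).
Proof. vm_compute; reflexivity. Qed.

Lemma unit_check : all8 (fun i => all8 (fun k => (cN 0 i k == (i == k)%:R) && (cN i 0 k == (i == k)%:R))).
Proof. vm_compute; reflexivity. Qed.

Lemma re0_check : all8 (fun i => all8 (fun j => cN i j 0 == if i == j then (if i == 0 then 1 else -1) else 0)).
Proof. vm_compute; reflexivity. Qed.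

Section Oct.
Variable R : realType.
Implicit Types p q a J : oct R.

Lemma coefR (i j k : 'I_8) : oct_coef R i j k = (cN i j k)%:~R.
Proof.
rewrite /oct_coef /cN; case: ifP => _; first by rewrite rmorph_nat.
case: ifP => _; first by rewrite rmorph_nat.
have -> : (i == j) = (nat_of_ord i == nat_of_ord j) by [].
case: ifP => _; first by rewrite rmorphN rmorph_nat.
case: ifP => _; first by rewrite rmorph1.
by case: ifP => _; rewrite ?rmorphN ?rmorph1 ?rmorph0.
Qed.

Lemma mulE p q k : oct_mul p q ord0 k = \sum_(i < 8) \sum_(j < 8) p ord0 i * q ord0 j * (cN i j k)%:~R.
Proof. by rewrite mxE; apply: eq_bigr => i _; apply: eq_bigr => j _; rewrite coefR. Qed.

Lemma oct_eE (i k : 'I_8) : oct_e R i ord0 k = (k == i)%:R.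
Proof. by rewrite mxE. Qed.

Lemma sum_delta (f : 'I_8 -> R) (i : 'I_8) : \sum_(k < 8) (k == i)%:R * f k = f i.
Proof.
rewrite (bigD1 i) //= eqxx mul1r big1 ?addr0 // => k /negbTE ->; by rewrite mul0r.
Qed.

Lemma sum_delta' (f : 'I_8 -> R) (i : 'I_8) : \sum_(k < 8) f k * (k == i)%:R = f i.
Proof. rewrite -[RHS](sum_delta f i); apply: eq_bigr => k _; by rewrite mulrC. Qed.


Lemma altE a J k : oct_mul (oct_mul a J) J ord0 k =
  \sum_(i < 8) a ord0 i * \sum_(j < 8) \sum_(l < 8) J ord0 j * J ord0 l * (XN i j l k)%:~R.
Proof.
rewrite mulE.
transitivity (\sum_(m < 8) \sum_(l < 8) \sum_(i < 8) \sum_(j < 8)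
   a ord0 i * J ord0 j * J ord0 l * ((cN i j m)%:~R * (cN m l k)%:~R)).
  apply: eq_bigr => m _; apply: eq_bigr => l _; rewrite mulE !mulr_suml.
  apply: eq_bigr => i _; rewrite !mulr_suml; apply: eq_bigr => j _; ring.
transitivity (\sum_(m < 8) \sum_(i < 8) \sum_(j < 8) \sum_(l < 8)
   a ord0 i * J ord0 j * J ord0 l * ((cN i j m)%:~R * (cN m l k)%:~R)).
  apply: eq_bigr => m _; rewrite exchange_big; apply: eq_bigr => i _; exact: exchange_big.
rewrite exchange_big; apply: eq_bigr => i _; rewrite exchange_big mulr_sumr.
apply: eq_bigr => j _; rewrite exchange_big mulr_sumr; apply: eq_bigr => l _.
rewrite /XN -s8E rmorph_sum !mulr_sumr; apply: eq_bigr => m _.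
rewrite rmorphM /=; ring.
Qed.

Lemma altE' a J k : oct_mul a (oct_mul J J) ord0 k =
  \sum_(i < 8) a ord0 i * \sum_(j < 8) \sum_(l < 8) J ord0 j * J ord0 l * (YN i j l k)%:~R.
Proof.
rewrite mulE; apply: eq_bigr => i _.
transitivity (\sum_(m < 8) \sum_(j < 8) \sum_(l < 8)
   a ord0 i * J ord0 j * J ord0 l * ((cN j l m)%:~R * (cN i m k)%:~R)).
  apply: eq_bigr => m _; rewrite mulE mulr_sumr !mulr_suml.
  apply: eq_bigr => j _; rewrite mulr_sumr !mulr_suml; apply: eq_bigr => l _; ring.
rewrite exchange_big mulr_sumr; apply: eq_bigr => j _.
rewrite exchange_big mulr_sumr; apply: eq_bigr => l _.
rewrite /YN -s8E rmorph_sum !mulr_sumr; apply: eq_bigr => m _.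
rewrite rmorphM /=; ring.
Qed.

Lemma symm8 (u : 'I_8 -> R) (E F : 'I_8 -> 'I_8 -> R) :
  (forall j l, E j l + E l j = F j l + F l j) ->
  \sum_(j < 8) \sum_(l < 8) u j * u l * E j l = \sum_(j < 8) \sum_(l < 8) u j * u l * F j l.
Proof.
move=> H.
have S2 (E' : 'I_8 -> 'I_8 -> R) : 2 * (\sum_(j < 8) \sum_(l < 8) u j * u l * E' j l) =
   \sum_(j < 8) \sum_(l < 8) u j * u l * (E' j l + E' l j).
  rewrite mulr2n mulrDl mul1r {2}exchange_big /= -big_split /=.
  apply: eq_bigr => j _; rewrite -big_split /=; apply: eq_bigr => l _.
  by rewrite mulrDr [u l * u j]mulrC.
apply: (@mulfI _ 2); first by rewrite pnatr_eq0.
rewrite !S2; apply: eq_bigr => j _; apply: eq_bigr => l _; by rewrite H.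
Qed.

Lemma oct_alt a J : oct_mul (oct_mul a J) J = oct_mul a (oct_mul J J).
Proof.
apply/rowP => k; rewrite altE altE'; apply: eq_bigr => i _; congr (_ * _).
apply: symm8 => j l; rewrite -!rmorphD /=; congr (_ %:~R); apply/eqP.
exact: (all8P (all8P (all8P (all8P alt_check i) j) l) k).
Qed.


Lemma mul_el (k : 'I_8) r m : oct_mul (oct_e R k) r ord0 m = \sum_(b < 8) r ord0 b * (cN k b m)%:~R.
Proof.
rewrite mulE; under eq_bigr => i _ do under eq_bigr => j _ do rewrite oct_eE -mulrA.
under eq_bigr => i _ do rewrite -mulr_sumr.
by rewrite sum_delta.
Qed.

Lemma mul_er q (k : 'I_8) b : oct_mul q (oct_e R k) ord0 b = \sum_(a < 8) q ord0 a * (cN a k b)%:~R.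
Proof.
rewrite mulE; apply: eq_bigr => i _.
under eq_bigr => j _ do rewrite oct_eE mulrAC.
by rewrite sum_delta'.
Qed.

Lemma oct_mul1 p : oct_mul p (oct1 R) = p.
Proof.
apply/rowP => k; rewrite mul_er.
under eq_bigr => a _ do rewrite (eqP (proj2 (andP (all8P (all8P unit_check a) k)))).
by rewrite -(sum_delta' (fun x => p ord0 x) k); apply: eq_bigr => a _; rewrite rmorph_nat.
Qed.

Lemma oct_1mul p : oct_mul (oct1 R) p = p.
Proof.
apply/rowP => k; rewrite mul_el.
under eq_bigr => a _ do rewrite (eqP (proj1 (andP (all8P (all8P unit_check a) k)))).
by rewrite -(sum_delta' (fun x => p ord0 x) k); apply: eq_bigr => a _; rewrite rmorph_nat.
Qed.

Lemma oct_mulZr (c : R) p q : oct_mul p (c *: q) = c *: oct_mul p q.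
Proof.
apply/rowP => k; rewrite !mxE mulr_sumr; apply: eq_bigr => i _.
rewrite mulr_sumr; apply: eq_bigr => j _; rewrite mxE; ring.
Qed.

Lemma oct_mulNl p q : oct_mul (- p) q = - oct_mul p q.
Proof.
apply/rowP => k; rewrite !mxE -sumrN; apply: eq_bigr => i _.
rewrite -sumrN; apply: eq_bigr => j _; rewrite mxE; ring.
Qed.

Lemma oct_mulDl p p' q : oct_mul (p + p') q = oct_mul p q + oct_mul p' q.
Proof.
apply/rowP => k; rewrite !mxE -big_split; apply: eq_bigr => i _.
rewrite -big_split; apply: eq_bigr => j _; rewrite mxE /=; ring.
Qed.

Lemma ee0 (i j : 'I_8) : oct_mul (oct_e R i) (oct_e R j) ord0 ord0 = (cN i j 0)%:~R.
Proof. rewrite mul_el; under eq_bigr => b _ do rewrite oct_eE; exact: (sum_delta (fun b => (cN i b 0)%:~R)). Qed.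

Lemma re_ident q : 6%:R *: q - \sum_(k < 8) oct_mul (oct_e R k) (oct_mul q (oct_e R k))
   = (12%:R * q ord0 ord0) *: oct1 R.
Proof.
apply/rowP => m; rewrite !mxE summxE.
under eq_bigr => k _ do rewrite mul_el.
under eq_bigr => k _ do under eq_bigr => b _ do rewrite mul_er mulr_suml.
transitivity (\sum_(a < 8) q ord0 a * (6 * (a == m)%:R - s8 (fun k => s8 (fun b => cN a k b * cN k b m)))%:~R).
  have E (a : 'I_8) : ((6 * (a == m)%:R - s8 (fun k => s8 (fun b => cN a k b * cN k b m)))%:~R : R)
     = 6 * (a == m)%:R - \sum_(k < 8) \sum_(b < 8) (cN a k b)%:~R * (cN k b m)%:~R.
    rewrite -s8E rmorphB rmorphM /= !rmorph_nat rmorph_sum; congr (_ - _).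
    by apply: eq_bigr => k _; rewrite -s8E rmorph_sum; apply: eq_bigr => b _; rewrite rmorphM.
  symmetry; transitivity (\sum_(a < 8) q ord0 a * (6 * (a == m)%:R - \sum_(k < 8) \sum_(b < 8) (cN a k b)%:~R * (cN k b m)%:~R)).
    by apply: eq_bigr => a _; congr (_ * _); exact: E.
  transitivity (\sum_(a < 8) q ord0 a * (6 * (a == m)%:R) - \sum_(a < 8) q ord0 a * (\sum_(k < 8) \sum_(b < 8) (cN a k b)%:~R * (cN k b m)%:~R)).
    by rewrite -sumrB; apply: eq_bigr => a _; ring.
  congr (_ - _).
    rewrite (eq_bigr (fun x : 'I_8 => (q ord0 x * 6) * (x == m)%:R)); last by move=> x _; ring.
    by rewrite (sum_delta' (fun x => q ord0 x * 6)) mulrC.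
  transitivity (\sum_(a < 8) \sum_(k < 8) \sum_(b < 8) q ord0 a * (cN a k b)%:~R * (cN k b m)%:~R).
    apply: eq_bigr => a _; rewrite mulr_sumr; apply: eq_bigr => k _.
    by rewrite mulr_sumr; apply: eq_bigr => b _; ring.
  rewrite exchange_big; apply: eq_bigr => k _.
  by rewrite exchange_big.
under eq_bigr => a _ do rewrite (eqP (all8P (all8P re_check a) m)).
under eq_bigr => a _ do rewrite rmorphM rmorph_nat /=.
have -> : (m == ord0 :> 'I_8)%:R = ((m == 0%N :> nat)%:R : R) by [].
rewrite (bigD1 ord0) //= big1 ?addr0; first by case: (m == 0%N :> nat); rewrite /=; ring.
by move=> a /negbTE; rewrite -val_eqE /= => ->; rewrite /=; ring.
Qed.

End Oct.

Section Bim.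
Context {R : realType} {V : completeNormedModType R} {lm : oct R -> V -> V} {rm : V -> oct R -> V}.
Hypothesis HB : is_Obimodule lm rm.

Let lmDZ : forall p a x y, lm p (a *: x + y) = a *: lm p x + lm p y. Proof. by case: HB. Qed.
Let lmDZl : forall p q a x, lm (a *: p + q) x = a *: lm p x + lm q x. Proof. by case: HB => _ []. Qed.
Let rmDZ : forall p a x y, rm (a *: x + y) p = a *: rm x p + rm y p. Proof. by case: HB => _ [] _ []. Qed.
Let rmDZr : forall p q a x, rm x (a *: p + q) = a *: rm x p + rm x q. Proof. by case: HB => _ [] _ [] _ []. Qed.
Lemma lm1 x : lm (oct1 R) x = x. Proof. by case: HB => _ [] _ [] _ [] _ [] ? _. Qed.
Lemma rm1 x : rm x (oct1 R) = x. Proof. by case: HB => _ [] _ [] _ [] _ [] _ [] ? _. Qed.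
Let assocs : forall p q x, assoc_l lm p q x = assoc_m lm rm q x p /\
      assoc_m lm rm q x p = assoc_r rm x p q /\ assoc_r rm x p q = - assoc_l lm q p x.
Proof. by case: HB => _ [] _ [] _ [] _ [] _ [] _. Qed.

Lemma lmD p x y : lm p (x + y) = lm p x + lm p y.
Proof. by rewrite -{1}[x]scale1r lmDZ scale1r. Qed.
Lemma lm0 p : lm p 0 = 0.
Proof. by apply: (addrI (lm p 0)); rewrite -lmD !addr0. Qed.
Lemma lmZ p a x : lm p (a *: x) = a *: lm p x.
Proof. by rewrite -[a *: x]addr0 lmDZ lm0 addr0. Qed.
Lemma lmN p x : lm p (- x) = - lm p x.
Proof. by rewrite -scaleN1r lmZ scaleN1r. Qed.
Lemma lmB p x y : lm p (x - y) = lm p x - lm p y.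
Proof. by rewrite lmD lmN. Qed.
Lemma lmDl p q x : lm (p + q) x = lm p x + lm q x.
Proof. by rewrite -{1}[p]scale1r lmDZl scale1r. Qed.
Lemma lm0l x : lm 0 x = 0.
Proof. by apply: (addrI (lm 0 x)); rewrite -lmDl !addr0. Qed.
Lemma lmZl p a x : lm (a *: p) x = a *: lm p x.
Proof. by rewrite -[a *: p]addr0 lmDZl lm0l addr0. Qed.
Lemma lmNl p x : lm (- p) x = - lm p x.
Proof. by rewrite -scaleN1r lmZl scaleN1r. Qed.
Lemma lmBl p q x : lm (p - q) x = lm p x - lm q x.
Proof. by rewrite lmDl lmNl. Qed.
Lemma lm_suml I (r : seq I) (P : pred I) (F : I -> oct R) x :
  lm (\sum_(i <- r | P i) F i) x = \sum_(i <- r | P i) lm (F i) x.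
Proof. exact: (big_morph (fun p => lm p x) (fun p q => lmDl p q x) (lm0l x)). Qed.

Lemma rmD p x y : rm (x + y) p = rm x p + rm y p.
Proof. by rewrite -{1}[x]scale1r rmDZ scale1r. Qed.
Lemma rm0 p : rm 0 p = 0.
Proof. by apply: (addrI (rm 0 p)); rewrite -rmD !addr0. Qed.
Lemma rmZ p a x : rm (a *: x) p = a *: rm x p.
Proof. by rewrite -[a *: x]addr0 rmDZ rm0 addr0. Qed.
Lemma rmN p x : rm (- x) p = - rm x p.
Proof. by rewrite -scaleN1r rmZ scaleN1r. Qed.
Lemma rmB p x y : rm (x - y) p = rm x p - rm y p.
Proof. by rewrite rmD rmN. Qed.
Lemma rm_sum I (r : seq I) (P : pred I) (F : I -> V) p :
  rm (\sum_(i <- r | P i) F i) p = \sum_(i <- r | P i) rm (F i) p.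
Proof. exact: (big_morph (fun x => rm x p) (fun x y => rmD p x y) (rm0 p)). Qed.
Lemma rmDr p q x : rm x (p + q) = rm x p + rm x q.
Proof. by rewrite -{1}[p]scale1r rmDZr scale1r. Qed.
Lemma rm0r x : rm x 0 = 0.
Proof. by apply: (addrI (rm x 0)); rewrite -rmDr !addr0. Qed.
Lemma rmZr p a x : rm x (a *: p) = a *: rm x p.
Proof. by rewrite -[a *: p]addr0 rmDZr rm0r addr0. Qed.
Lemma rm_scal a x : rm x (a *: oct1 R) = a *: x.
Proof. by rewrite rmZr rm1. Qed.

Lemma ReV_lmA p q x : in_ReV lm rm x -> lm p (lm q x) = lm (oct_mul p q) x.
Proof. by move=> [_ H]; have := H p q; rewrite /assoc_l => /eqP; rewrite subr_eq0 => /eqP ->. Qed.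
Lemma ReV_rmA p q x : in_ReV lm rm x -> rm (rm x p) q = rm x (oct_mul p q).
Proof.
move=> [_ H]; have [_ [_ E]] := assocs p q x.
by apply/eqP; rewrite -subr_eq0; rewrite /assoc_r in E; rewrite E H oppr0.
Qed.
Lemma ReV_lr p x : in_ReV lm rm x -> rm x p = lm p x.
Proof. by move=> [H _]; rewrite H. Qed.

Lemma ReV0 : in_ReV lm rm 0.
Proof. split=> [p|p q]; first by rewrite lm0 rm0. by rewrite /assoc_l !lm0 subrr. Qed.
Lemma ReVB x y : in_ReV lm rm x -> in_ReV lm rm y -> in_ReV lm rm (x - y).
Proof.
move=> [Hx1 Hx2] [Hy1 Hy2]; split=> [p|p q]; first by rewrite lmB rmB Hx1 Hy1.
by rewrite /assoc_l !lmB; have := Hx2 p q; have := Hy2 p q; rewrite /assoc_l => /eqP; rewrite subr_eq0 => /eqP -> /eqP; rewrite subr_eq0 => /eqP ->; rewrite subrr.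
Qed.

Definition Pop (w : V) : V := 6%:R *: w - \sum_(k < 8) lm (oct_e R k) (rm w (oct_e R k)).

Lemma Pop0 : Pop 0 = 0.
Proof. by rewrite /Pop scaler0 big1 ?subr0 // => k _; rewrite rm0 lm0. Qed.

Lemma Pop_sum (F : 'I_8 -> V) : Pop (\sum_(i < 8) F i) = \sum_(i < 8) Pop (F i).
Proof.
rewrite /Pop sumrB scaler_sumr; congr (_ - _).
rewrite exchange_big; apply: eq_bigr => k _.
by rewrite rm_sum (big_morph (lm (oct_e R k)) (lmD _) (lm0 _)).
Qed.

Lemma Pop_re x q : in_ReV lm rm x -> Pop (rm x q) = (12%:R * q ord0 ord0) *: x.
Proof.
move=> Hx; rewrite /Pop.
under eq_bigr => k _ do rewrite (ReV_rmA _ _ _ Hx) (ReV_lr _ _ Hx) (ReV_lmA _ _ _ Hx).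
by rewrite -lm_suml (ReV_lr _ _ Hx) -lmZl -lmBl re_ident lmZl lm1.
Qed.

Lemma decomp0 (d : 'I_8 -> V) : (forall i, in_ReV lm rm (d i)) ->
  \sum_(i < 8) rm (d i) (oct_e R i) = 0 -> forall i, d i = 0.
Proof.
move=> Hd H0 j.
have := congr1 (fun w => Pop (rm w (oct_e R j))) H0; rewrite /= rm0 Pop0 rm_sum Pop_sum.
under eq_bigr => i _ do rewrite (ReV_rmA _ _ _ (Hd i)) Pop_re // ee0.
rewrite (bigD1 j) //= big1 ?addr0; last first.
  move=> i Hij; have := all8P (all8P re0_check i) j; rewrite (_ : (nat_of_ord i == j) = false).
    by move=> /eqP ->; rewrite mulr0 scale0r.
  by apply/negbTE; rewrite val_eqE.
have := all8P (all8P re0_check j) j; rewrite eqxx => /eqP ->.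
case: ifP => _ /eqP; rewrite ?rmorphN rmorph1 ?mulr1 ?mulrN1 ?scaleNr ?oppr_eq0 scaler_eq0 pnatr_eq0 /=;
  by move=> /eqP.
Qed.

Lemma decomp_real v : in_ReV lm rm v ->
  re_comp lm rm v ord0 = v /\ forall i, i != ord0 -> re_comp lm rm v i = 0.
Proof.
move=> Hv.
pose xs0 (i : 'I_8) := if i == ord0 then v else 0.
have D0 : is_decomp lm rm v xs0.
  split=> [i|]; first by rewrite /xs0; case: ifP => _ //; exact: ReV0.
  rewrite (bigD1 ord0) //= big1 ?addr0 /xs0 ?eqxx ?rm1 // => i /negbTE ->; exact: rm0.
have D := epsilon_spec (inhabits (fun _ : 'I_8 => (0 : V))) (is_decomp lm rm v) (ex_intro _ _ D0).
rewrite -/(re_comp lm rm v) in D.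
have Hd := @decomp0 (fun i => re_comp lm rm v i - xs0 i).
have E : forall i, re_comp lm rm v i - xs0 i = 0.
  apply: Hd => [i|]; first by apply: ReVB; [exact: (proj1 D) | exact: (proj1 D0)].
  under eq_bigr => i _ do rewrite rmB.
  by rewrite sumrB -(proj2 D) -(proj2 D0) subrr.
split; first by have := E ord0; rewrite /xs0 eqxx => /eqP; rewrite subr_eq0 => /eqP.
by move=> i Hi; have := E i; rewrite /xs0 (negbTE Hi) subr0.
Qed.

Lemma ext_real (h : V -> V) v : in_ReV lm rm v -> h 0 = 0 -> ext lm rm h v = h v.
Proof.
move=> Hv h0; have [E0 Ei] := @decomp_real v Hv.
rewrite /ext (bigD1 ord0) //= big1 ?addr0; first by rewrite E0 rm1.
by move=> i Hi; rewrite Ei // h0 rm0.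
Qed.

End Bim.

Section Gen.
Context {R : realType} {W : normedModType R}.
Local Notation U := (R^o * R^o)%type.

Section Lin2.
Variables (a b : W).
Definition lin2 (t : U) : W := t.1 *: a + t.2 *: b.
Lemma lin2_lin : linear lin2.
Proof. by move=> c x y; rewrite /lin2 /= scalerDr !scalerA !scalerDl addrACA. Qed.
HB.instance Definition _ := GRing.isLinear.Build R U W *:%R lin2 lin2_lin.
Lemma lin2_bound t : `|lin2 t| <= (`|a| + `|b|) * `|t|.
Proof.
rewrite /lin2 (le_trans (ler_normD _ _)) // !normrZ mulrDl mulrC [`|b| * _]mulrC.
have h1 : `|t.1| <= `|t| by rewrite prod_normE le_max lexx.
have h2 : `|t.2| <= `|t| by rewrite prod_normE le_max lexx orbT.
by rewrite lerD // ?ler_wpM2l // ler_wpM2r.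
Qed.
Lemma lin2_cont : continuous lin2.
Proof.
apply: (@bounded_linear_continuous _ _ _ lin2).
apply/linear_boundedP; near=> r.
have Hr : `|a| + `|b| <= r by near: r; apply: nbhs_pinfty_ge; exact: num_real.
by move=> x; rewrite (le_trans (lin2_bound x)) // ler_wpM2r.
Unshelve. all: by end_near. Qed.
End Lin2.

Lemma diff_quad (f : U -> W) (x : U) (a b : W) (K d : R) : 0 < d -> 0 < K ->
  (forall t : U, `|t| < d -> `|f (x + t) - f x - lin2 a b t| <= K * `|t| ^+ 2) ->
  differentiable f x /\ 'd f x = lin2 a b :> (U -> W).
Proof.
move=> d0 K0 H.
have dfx : f \o shift x = cst (f x) + lin2 a b +o_ (0 : U) id.
  apply/eqaddoP => eps eps0; near=> h => /=.
  have hd : `|h| < d by near: h; exact (@nbhs0_lt _ U _ d0).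
  have he : `|h| < eps / K by near: h; exact (@nbhs0_lt _ U _ (divr_gt0 eps0 K0)).
  rewrite [X in `|X|](_ : _ = f (x + h) - f x - lin2 a b h); last first.
    by rewrite !fctE /= [h + x]addrC opprD addrA.
  apply: (le_trans (H _ hd)); rewrite expr2 mulrA ler_wpM2r //.
  by rewrite mulrC -ler_pdivlMr // ltW.
have dL := diff_unique (lin2_cont a b) dfx.
split=> //; apply/diff_locallyP; rewrite dL; split => //; exact: lin2_cont.
Unshelve. all: by end_near. Qed.

Lemma cont_lip (f : U -> W) (z : U) (K d : R) : 0 < d ->
  (forall w : U, `|w - z| < d -> `|f w - f z| <= K * `|w - z|) -> {for z, continuous f}.
Proof.
move=> d0 H; apply/cvgrPdist_le => eps eps0.
have K1 : 0 < `|K| + 1 by rewrite ltr_wpDl.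
near=> w.
have wd : `|w - z| < d.
  near: w; have := @near_ball _ U z d d0; apply: filterS => w; rewrite -ball_normE /= distrC //.
have we : `|w - z| < eps / (`|K| + 1).
  near: w; have := @near_ball _ U z _ (divr_gt0 eps0 K1); apply: filterS => w; rewrite -ball_normE /= distrC //.
rewrite distrC (le_trans (H _ wd)) //.
rewrite (le_trans (ler_wpM2r _ (ler_norm K))) //.
apply: (le_trans (ler_wpM2r (normr_ge0 _) (ler_wpDr ler01 (lexx `|K|)))).
by rewrite mulrC -ler_pdivlMr // ltW.
Unshelve. all: by end_near. Qed.

End Gen.

Section Fix.
Local Open Scope classical_set_scope.
Lemma fixpt {R : realType} {X : completeNormedModType R} (F : X -> X) (q : R) :
  0 <= q -> q < 1 -> (forall x y, `|F x - F y| <= q * `|x - y|) -> exists p, p = F p.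
Proof.
move=> q0 q1 H.
have ctr : is_contraction (totalfun F : {fun [set: X] >-> [set: X]}).
  exists (NngNum q0); split => //.
  by move=> [x y] /= _; apply: H.
have [p _ Hp] := banach_fixed_point ctr closedT (ex_intro _ 0 I).
by exists p.
Qed.
End Fix.

Section Op.
Context {R : realType} {V : completeNormedModType R}.
Implicit Types (f S A K B : V -> V).

Lemma linD f : is_Rlinear f -> forall x y, f (x + y) = f x + f y.
Proof. by move=> H x y; rewrite -{1}[x]scale1r H scale1r. Qed.
Lemma lin0 f : is_Rlinear f -> f 0 = 0.
Proof. by move=> H; apply: (addrI (f 0)); rewrite -linD // !addr0. Qed.
Lemma linZ f : is_Rlinear f -> forall a x, f (a *: x) = a *: f x.
Proof. by move=> H a x; rewrite -[a *: x]addr0 H lin0 // addr0. Qed.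
Lemma linN f : is_Rlinear f -> forall x, f (- x) = - f x.
Proof. by move=> H x; rewrite -scaleN1r linZ // scaleN1r. Qed.
Lemma linB f : is_Rlinear f -> forall x y, f (x - y) = f x - f y.
Proof. by move=> H x y; rewrite linD // linN. Qed.

Arguments linD {f}. Arguments lin0 {f}. Arguments linZ {f}. Arguments linN {f}. Arguments linB {f}.

Lemma perturb S A K (C e : R) :
  is_Rlinear S -> is_Rlinear A -> is_Rlinear K -> 0 <= C -> 0 <= e ->
  (forall x, `|A x| <= C * `|x|) -> (forall x, A (S x) = x) -> (forall x, S (A x) = x) ->
  (forall x, `|K x| <= e * `|x|) -> C * e <= 2^-1 ->
  exists B, is_inverse_op (fun x => S x + K x) B /\ (forall y, `|B y| <= 2 * C * `|y|).
Proof.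
move=> LS LA LK C0 e0 HA AS SA HK Ce.
set S' := fun x => S x + K x.
have LS' : is_Rlinear S'.
  by move=> a x y; rewrite /S' LS LK scalerDr !addrA; congr (_ + _); rewrite addrAC.
have bnd x : `|x| <= 2 * C * `|S' x|.
  have E : x = A (S' x) - A (K x) by rewrite /S' (linD LA) AS addrK.
  have h1 : `|A (K x)| <= 2^-1 * `|x|.
    apply: (le_trans (HA _)); apply: (le_trans (ler_wpM2l C0 (HK x))).
    by rewrite mulrA ler_wpM2r.
  have h2 : `|x| <= C * `|S' x| + 2^-1 * `|x|.
    rewrite {1}E; apply: (le_trans (ler_normB _ _)); exact: lerD.
  rewrite -mulrA; move: h2; set a := `|x|; set b := C * _; lra.
have inj x y : S' x = S' y -> x = y.
  move=> Hxy; apply/eqP; rewrite -subr_eq0 -normr_le0.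
  by apply: (le_trans (bnd _)); rewrite (linB LS') Hxy subrr normr0 mulr0.
have surj y : exists x, S' x = y.
  have [x Hx] : exists x, x = A y - A (K x).
    apply: (@fixpt R V (fun x => A y - A (K x)) (2^-1)) => [||x1 x2]; [by rewrite invr_ge0 | by rewrite invf_lt1 // ltr1n |].
    rewrite [X in `|X|](_ : _ = A (K (x2 - x1))); last first.
      by rewrite (linB LK) (linB LA) opprD opprK addrACA subrr add0r addrC.
    apply: (le_trans (HA _)); apply: (le_trans (ler_wpM2l C0 (HK _))).
    by rewrite mulrA distrC ler_wpM2r.
  by exists x; rewrite /S' {1}Hx (linB LS) !SA subrK.
have [B HBy] := boolp.choice surj.
have LB : is_Rlinear B.
  by move=> a x y; apply: inj; rewrite LS' !HBy.
exists B; split; last by move=> y; rewrite -{2}(HBy y); exact: bnd.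
split; last by split=> // x; apply: inj; rewrite HBy.
split=> //; exists (2 * C) => y; rewrite -{2}(HBy y); exact: bnd.
Qed.

Lemma inv_uniq S B B' : is_inverse_op S B -> is_inverse_op S B' -> forall y, B y = B' y.
Proof. by move=> [_ [H1 H2]] [_ [H1' H2']] y; rewrite -{1}(H2' y) H1. Qed.

End Op.
Arguments linD {R V f}. Arguments lin0 {R V f}. Arguments linZ {R V f}. Arguments linN {R V f}. Arguments linB {R V f}.

Section Res.
Context {R : realType} {V : completeNormedModType R} {lm : oct R -> V -> V} {rm : V -> oct R -> V}.
Hypothesis HV : is_Banach_Obimodule lm rm.
Variables (T : V -> V) (HT : is_BRO lm rm T) (J : oct R).
Local Notation U := (R^o * R^o)%type.

Let HB : is_Obimodule lm rm := HV.1.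
Let Hnr p x : `|rm x p| = oct_norm p * `|x| := HV.2.2 p x.
Let LT : is_Rlinear T := HT.1.1.

Definition sw (w : U) : oct R := w.1 *: oct1 R + w.2 *: J.
Definition Sop (w : U) : V -> V := Rs_minus rm T (sw w).
Definition Kop (t : U) (x : V) : V := t.1 *: x + t.2 *: rm x J.
Definition kk : R := 1 + oct_norm J.

Lemma nJ_ge0 : 0 <= oct_norm J.
Proof. exact: sqrtr_ge0. Qed.
Lemma kk_gt0 : 0 < kk.
Proof. by rewrite /kk ltr_pwDl // nJ_ge0. Qed.

Lemma Sop_lin w : is_Rlinear (Sop w).
Proof.
move=> a x y; rewrite /Sop /Rs_minus LT (rmD HB) (rmZ HB) scalerBr.
by rewrite opprD !addrA; congr (_ + _); rewrite addrAC.
Qed.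

Lemma Sop_bnd w : exists C, forall x, `|Sop w x| <= C * `|x|.
Proof.
have [CT HCT] := HT.1.2.
exists (oct_norm (sw w) + CT) => x; rewrite /Sop /Rs_minus.
by rewrite (le_trans (ler_normB _ _)) // mulrDl lerD // Hnr.
Qed.

Lemma Sop_add w t x : Sop (w + t) x = Sop w x + Kop t x.
Proof.
rewrite /Sop /Rs_minus /Kop /sw /= !scalerDl.
rewrite -addrA [t.1 *: _ + _]addrC -!addrA addrA !(rmDr HB) !(rmZr HB) (rm1 HB).
by rewrite -!addrA; do 2 congr (_ + _); rewrite [RHS]addrC addrA [t.2 *: _ + _]addrC.
Qed.

Lemma Kop_lin t : is_Rlinear (Kop t).
Proof.
move=> a x y; rewrite /Kop (rmD HB) (rmZ HB) !scalerDr !scalerA.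
rewrite [a * _]mulrC [a * t.2]mulrC -!scalerA.
by rewrite !addrA; congr (_ + _); rewrite addrAC.
Qed.

Lemma Kop_bnd t x : `|Kop t x| <= (kk * `|t|) * `|x|.
Proof.
rewrite /Kop (le_trans (ler_normD _ _)) // !normrZ Hnr /kk.
have h1 : `|t.1| <= `|t| by rewrite prod_normE le_max lexx.
have h2 : `|t.2| <= `|t| by rewrite prod_normE le_max lexx orbT.
apply: (le_trans (lerD (ler_wpM2r (normr_ge0 x) h1) (ler_wpM2r (mulr_ge0 nJ_ge0 (normr_ge0 x)) h2))).
by rewrite [X in _ <= X](_ : _ = `|t| * `|x| + `|t| * (oct_norm J * `|x|)) //; ring.
Qed.

Definition good (w : U) := invertible_op (Sop w).
Definition Bw (w : U) := inv_op (Sop w).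

Lemma good_inv w : good w -> is_inverse_op (Sop w) (Bw w).
Proof.
move=> [_ [S' HS']]; rewrite /Bw /inv_op.
exact: (epsilon_spec (inhabits (fun x : V => x)) (is_inverse_op (Sop w)) (ex_intro _ _ HS')).
Qed.

Lemma near_good w : good w -> exists C, 0 < C /\ (forall y, `|Bw w y| <= C * `|y|) /\
  forall t, kk * `|t| * C <= 2^-1 -> good (w + t) /\
    (forall y, `|Bw (w + t) y| <= 2 * C * `|y|) /\
    (forall y, Bw (w + t) y - Bw w y = - Bw (w + t) (Kop t (Bw w y))).
Proof.
move=> gw; have [[LB [C0 HC0]] [BS SB]] := good_inv _ gw.
set C := Num.max C0 1.
have C1 : 1 <= C by rewrite le_max lexx orbT.
have HC y : `|Bw w y| <= C * `|y|.
  by rewrite (le_trans (HC0 y)) // ler_wpM2r // le_max lexx.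
exists C; split; first lra.
split=> // t Ht.
have Ce : C * (kk * `|t|) <= 2^-1 by rewrite mulrC.
have [B' [HB' HB'b]] := @perturb R V (Sop w) (Bw w) (Kop t) C (kk * `|t|) (Sop_lin w) LB (Kop_lin t)
   (ltW (lt_le_trans ltr01 C1)) (mulr_ge0 (ltW kk_gt0) (normr_ge0 _)) HC BS SB (Kop_bnd t) Ce.
have E : (fun x => Sop w x + Kop t x) = Sop (w + t).
  by apply: funext => x; rewrite Sop_add.
rewrite E in HB'.
have gwt : good (w + t).
  split; last by exists B'.
  split; [exact: Sop_lin | exact: Sop_bnd].
have Eq y : Bw (w + t) y = B' y := inv_uniq _ _ _ (good_inv _ gwt) HB' y.
split=> //; split; first by move=> y; rewrite Eq.
move=> y; have [[LB' _] [B'S SB']] := good_inv _ gwt.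
have Ey : y = Sop (w + t) (Bw w y) - Kop t (Bw w y) by rewrite Sop_add addrK SB.
by rewrite {1}Ey (linB LB') B'S addrAC subrr add0r.
Qed.


Variables (phi : V -> oct R) (Hphi : is_oct_functional rm phi) (v : V) (Hv : in_ReV lm rm v).

Let phiD : forall x y, phi (x + y) = phi x + phi y := Hphi.1.
Let phi_rm : forall x p, phi (rm x p) = oct_mul (phi x) p := Hphi.2.1.
Lemma phi0 : phi 0 = 0.
Proof. by apply: (addrI (phi 0)); rewrite -phiD !addr0. Qed.
Lemma phiZ a x : phi (a *: x) = a *: phi x.
Proof. by rewrite -(rm_scal HB) phi_rm oct_mulZr oct_mul1. Qed.
Lemma phiN x : phi (- x) = - phi x.
Proof. by rewrite -scaleN1r phiZ scaleN1r. Qed.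
Lemma phiB x y : phi (x - y) = phi x - phi y.
Proof. by rewrite phiD phiN. Qed.
Lemma phi_lin : linear phi.
Proof. by move=> a x y; rewrite phiD phiZ. Qed.
HB.instance Definition _ := GRing.isLinear.Build R V (oct R) *:%R phi phi_lin.

Lemma phi_bnd : exists M, 0 < M /\ forall y, `|phi y| <= M * `|y|.
Proof.
have := @continuous_linear_bounded R V (oct R) 0 phi (Hphi.2.2 0).
move=> /linear_boundedP /pinfty_ex_gt0 [M M0 HM].
by exists M.
Qed.

Definition Gf (w : U) : oct R := phi (circ_inv lm rm (Rs_minus rm T (w.1 *: oct1 R + w.2 *: J)) v).
Definition D1 (w : U) : oct R := phi (- Bw w (Bw w v)).
Definition D2 (w : U) : oct R := phi (- Bw w (rm (Bw w v) J)).

Lemma Gf_good w : good w -> Gf w = phi (Bw w v).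
Proof.
move=> gw; have [[LB _] _] := good_inv _ gw.
by rewrite /Gf /circ_inv (ext_real HB) //; exact: (lin0 LB).
Qed.


Lemma small_t (C : R) (t : U) : 0 < C -> `|t| < (2 * kk * C)^-1 -> kk * `|t| * C <= 2^-1.
Proof.
move=> C0 Ht.
have D0 : 0 < 2 * kk * C by rewrite !mulr_gt0 // kk_gt0.
have e1 : 2 * kk * C * `|t| < 1.
  by rewrite -[X in _ < X](mulfV (lt0r_neq0 D0)) ltr_pM2l.
have -> : kk * `|t| * C = 2^-1 * (2 * kk * C * `|t|).
  by rewrite !mulrA mulVf ?pnatr_eq0 // mul1r mulrAC.
by rewrite -[X in _ <= X]mulr1 ler_wpM2l ?invr_ge0 ?ler0n // ltW.
Qed.

Lemma G_diff w : good w -> differentiable Gf w /\ 'd Gf w = lin2 (D1 w) (D2 w) :> (U -> oct R).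
Proof.
move=> gw; have [C [C0 [HC Hnear]]] := near_good _ gw.
have [M [M0 HM]] := phi_bnd.
have [[LB _] _] := good_inv _ gw.
have kk0 := kk_gt0.
apply: (@diff_quad R (oct R) Gf w (D1 w) (D2 w) (M * (2 * C ^+ 3 * kk ^+ 2 * `|v|) + 1) (2 * kk * C)^-1).
- by rewrite invr_gt0 !mulr_gt0.
- by rewrite ltr_pwDr // !mulr_ge0 // ltW.
move=> t Ht.
have [gwt [HB'b Hres]] := Hnear t (small_t C t C0 Ht).
rewrite !Gf_good //.
have E : phi (Bw (w + t) v) - phi (Bw w v) - lin2 (D1 w) (D2 w) t = phi (Bw (w + t) (Kop t (Bw w (Kop t (Bw w v))))).
  have E1 : lin2 (D1 w) (D2 w) t = - phi (Bw w (Kop t (Bw w v))).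
    by rewrite /lin2 /D1 /D2 -!phiZ -phiD -phiN /Kop (linD LB) !(linZ LB) !scalerN opprD.
  rewrite E1 opprK -phiB -phiD; congr phi.
  by rewrite (Hres v) addrC -opprB (Hres (Kop t (Bw w v))) opprK.
rewrite E; apply: (le_trans (HM _)).
have nt := normr_ge0 t; have nv := normr_ge0 v.
have k0 : 0 <= kk * `|t| by rewrite mulr_ge0 // ltW.
have c5 := HC v.
have c4 := le_trans (Kop_bnd t (Bw w v)) (ler_wpM2l k0 c5).
have c3 := le_trans (HC _) (ler_wpM2l (ltW C0) c4).
have c2 := le_trans (Kop_bnd t _) (ler_wpM2l k0 c3).
have c1 := le_trans (HB'b _) (ler_wpM2l (mulr_ge0 (ler0n _ 2) (ltW C0)) c2).
apply: (le_trans (ler_wpM2l (ltW M0) c1)).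
rewrite [X in X <= _](_ : _ = (M * (2 * C ^+ 3 * kk ^+ 2 * `|v|)) * `|t| ^+ 2); last by ring.
by rewrite ler_wpM2r ?exprn_ge0 // lerDl.
Qed.


Lemma D_eq w : good w -> 'D_((1 : R^o), (0 : R^o)) Gf w = D1 w /\ 'D_((0 : R^o), (1 : R^o)) Gf w = D2 w.
Proof.
move=> gw; have [dG EG] := G_diff w gw.
rewrite !deriveE // EG /lin2 /=.
by rewrite !scale1r !scale0r addr0 add0r.
Qed.

Lemma D1_cont z : good z -> {for z, continuous (fun w => 'D_((1 : R^o), (0 : R^o)) Gf w)}.
Proof.
move=> gz; have [C [C0 [HC Hnear]]] := near_good _ gz.
have [M [M0 HM]] := phi_bnd.
have [[LB _] _] := good_inv _ gz.
have kk0 := kk_gt0.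
apply: (@cont_lip R (oct R) _ z (M * (6 * C ^+ 3 * kk * `|v|)) (2 * kk * C)^-1).
  by rewrite invr_gt0 !mulr_gt0.
move=> w Hw; set t := w - z.
have Ew : w = z + t by rewrite /t addrC subrK.
have [gwt [HB'b Hres]] := Hnear t (small_t C t C0 Hw).
rewrite Ew (D_eq _ gwt).1 (D_eq _ gz).1 /D1 -phiB opprK addrC.
apply: (le_trans (HM _)).
have nt := normr_ge0 t; have nv := normr_ge0 v.
have k0 : 0 <= kk * `|t| by rewrite mulr_ge0 // ltW.
have C20 : 0 <= 2 * C by rewrite mulr_ge0 // ltW.
have EA : Bw z (Bw z v) - Bw z (Bw (z + t) v) = Bw z (Bw (z + t) (Kop t (Bw z v))).
  by rewrite -(linB LB) -opprB (Hres v) opprK.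
have EB : Bw z (Bw (z + t) v) - Bw (z + t) (Bw (z + t) v) = Bw (z + t) (Kop t (Bw z (Bw (z + t) v))).
  by rewrite -opprB (Hres _) opprK.
have T1 := ler_distD (Bw z (Bw (z + t) v)) (Bw z (Bw z v)) (Bw (z + t) (Bw (z + t) v)).
rewrite EA EB in T1.
have a1 : `|Bw z (Bw (z + t) (Kop t (Bw z v)))| <= C * (2 * C * (kk * `|t| * (C * `|v|))).
  apply: (le_trans (HC _)); apply: ler_wpM2l; first exact: ltW.
  apply: (le_trans (HB'b _)); apply: ler_wpM2l => //.
  apply: (le_trans (Kop_bnd _ _)); apply: ler_wpM2l => //; exact: HC.
have a2 : `|Bw (z + t) (Kop t (Bw z (Bw (z + t) v)))| <= 2 * C * (kk * `|t| * (C * (2 * C * `|v|))).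
  apply: (le_trans (HB'b _)); apply: ler_wpM2l => //.
  apply: (le_trans (Kop_bnd _ _)); apply: ler_wpM2l => //.
  apply: (le_trans (HC _)); apply: ler_wpM2l; first exact: ltW.
  exact: HB'b.
apply: (le_trans (ler_wpM2l (ltW M0) (le_trans T1 (lerD a1 a2)))).
rewrite [X in _ <= X](_ : _ = M * (C * (2 * C * (kk * `|t| * (C * `|v|))) +
   2 * C * (kk * `|t| * (C * (2 * C * `|v|))))) //; ring.
Qed.


Lemma D2_cont z : good z -> {for z, continuous (fun w => 'D_((0 : R^o), (1 : R^o)) Gf w)}.
Proof.
move=> gz; have [C [C0 [HC Hnear]]] := near_good _ gz.
have [M [M0 HM]] := phi_bnd.
have [[LB _] _] := good_inv _ gz.
have kk0 := kk_gt0.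
apply: (@cont_lip R (oct R) _ z (M * (6 * C ^+ 3 * kk * oct_norm J * `|v|)) (2 * kk * C)^-1).
  by rewrite invr_gt0 !mulr_gt0.
move=> w Hw; set t := w - z.
have Ew : w = z + t by rewrite /t addrC subrK.
have [gwt [HB'b Hres]] := Hnear t (small_t C t C0 Hw).
rewrite Ew (D_eq _ gwt).2 (D_eq _ gz).2 /D2 -phiB opprK addrC.
apply: (le_trans (HM _)).
have nt := normr_ge0 t; have nv := normr_ge0 v; have nJ := nJ_ge0.
have k0 : 0 <= kk * `|t| by rewrite mulr_ge0 // ltW.
have C20 : 0 <= 2 * C by rewrite mulr_ge0 // ltW.
have EA : Bw z (rm (Bw z v) J) - Bw z (rm (Bw (z + t) v) J) = Bw z (rm (Bw (z + t) (Kop t (Bw z v))) J).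
  by rewrite -(linB LB) -(rmB HB) -opprB (Hres v) opprK.
have EB : Bw z (rm (Bw (z + t) v) J) - Bw (z + t) (rm (Bw (z + t) v) J) =
   Bw (z + t) (Kop t (Bw z (rm (Bw (z + t) v) J))).
  by rewrite -opprB (Hres _) opprK.
have T1 := ler_distD (Bw z (rm (Bw (z + t) v) J)) (Bw z (rm (Bw z v) J)) (Bw (z + t) (rm (Bw (z + t) v) J)).
rewrite EA EB in T1.
have a1 : `|Bw z (rm (Bw (z + t) (Kop t (Bw z v))) J)| <= C * (oct_norm J * (2 * C * (kk * `|t| * (C * `|v|)))).
  apply: (le_trans (HC _)); apply: ler_wpM2l; first exact: ltW.
  rewrite Hnr; apply: ler_wpM2l => //.
  apply: (le_trans (HB'b _)); apply: ler_wpM2l => //.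
  apply: (le_trans (Kop_bnd _ _)); apply: ler_wpM2l => //; exact: HC.
have a2 : `|Bw (z + t) (Kop t (Bw z (rm (Bw (z + t) v) J)))| <=
    2 * C * (kk * `|t| * (C * (oct_norm J * (2 * C * `|v|)))).
  apply: (le_trans (HB'b _)); apply: ler_wpM2l => //.
  apply: (le_trans (Kop_bnd _ _)); apply: ler_wpM2l => //.
  apply: (le_trans (HC _)); apply: ler_wpM2l; first exact: ltW.
  rewrite Hnr; apply: ler_wpM2l => //; exact: HB'b.
apply: (le_trans (ler_wpM2l (ltW M0) (le_trans T1 (lerD a1 a2)))).
rewrite [X in _ <= X](_ : _ = M * (C * (oct_norm J * (2 * C * (kk * `|t| * (C * `|v|)))) +
   2 * C * (kk * `|t| * (C * (oct_norm J * (2 * C * `|v|)))))) //; ring.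
Qed.

Lemma CR_eq z : good z -> CJ_epa lm rm J (Bw z) -> oct_sphere J ->
  'D_((1 : R^o), (0 : R^o)) Gf z + oct_mul ('D_((0 : R^o), (1 : R^o)) Gf z) J = 0.
Proof.
move=> gz epa HJ.
have [[LB _] _] := good_inv _ gz.
have CJ : in_CJ J J by exists 0, 1; rewrite scale0r add0r scale1r.
have e1 := epa 1%N v J isT Hv CJ.
have e2 := epa 2%N v J isT Hv CJ.
rewrite /= in e1 e2.
rewrite (D_eq _ gz).1 (D_eq _ gz).2 /D1 /D2.
have Hm1 a : oct_mul a (- oct1 R) = - a by rewrite -scaleN1r oct_mulZr oct_mul1 scaleN1r.
rewrite -e1 e2 -(rmN HB) phi_rm oct_alt HJ Hm1 phiN.
by rewrite subrr.
Qed.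

End Res.

Theorem mainTheorem8 (R : realType) (V : completeNormedModType R)
    (lm : oct R -> V -> V) (rm : V -> oct R -> V)
    (HV : is_Banach_Obimodule lm rm)
    (T : V -> V) (HT : is_BRO lm rm T)
    (v : V) (Hv : in_ReV lm rm v)
    (phi : V -> oct R) (Hphi : is_oct_functional rm phi)
    (J : oct R) (HJ : oct_sphere J) :
  let g : oct R -> oct R := fun s => phi (circ_inv lm rm (Rs_minus rm T s) v) in
  let G : (R^o * R^o)%type -> oct R := fun z => g (z.1 *: oct1 R + z.2 *: J) in
  let U : (R^o * R^o)%type -> Prop := fun z => rhoJ lm rm T J (z.1 *: oct1 R + z.2 *: J) in
  forall z : (R^o * R^o)%type, U z ->
    [/\ differentiable G z,
        {for z, continuous (fun w => 'D_((1 : R^o), (0 : R^o)) G w)},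
        {for z, continuous (fun w => 'D_((0 : R^o), (1 : R^o)) G w)} &
        'D_((1 : R^o), (0 : R^o)) G z + oct_mul ('D_((0 : R^o), (1 : R^o)) G z) J = 0].
Proof.
move=> g G U z [_ [gz epa]].
have gz' : good T J z := gz.
split.
- exact (G_diff HV _ HT J _ Hphi _ Hv z gz').1.
- exact (D1_cont HV _ HT J _ Hphi _ Hv z gz').
- exact (D2_cont HV _ HT J _ Hphi _ Hv z gz').
- exact (CR_eq HV _ HT J _ Hphi _ Hv z gz' epa HJ).
Qed.
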